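(* For every $N\ge1$ and $m\ge1$, $w^{St}_{\mathfrak{so}(N)}((1,2,\dots,m))=\frac{(N-1)^m+1-N}{N}$ if $m$ is odd, and $=\frac{(N-1)^m-1+N^2}{N}$ if $m$ is even.
   Context: For $1\le i\le N$, $\bar i=N+1-i$, $F_{ij}=E_{ij}-E_{\bar j\bar i}$ ($E_{ij}$ matrix units), spanning $\mathfrak{so}(N)$; for $\alpha\in\mathbb{S}_m$, $w_{\mathfrak{so}(N)}(\alpha)=\sum_{i_1,\dots,i_m=1}^N F_{i_1i_{\alpha(1)}}\cdots F_{i_mi_{\alpha(m)}}\in U(\mathfrak{so}(N))$, and $w^{St}_{\mathfrak{so}(N)}(\alpha)=\frac1N\operatorname{Tr}\rho(w_{\mathfrak{so}(N)}(\alpha))$ with $\rho$ the standard $N$-dimensional matrix representation extended to $U(\mathfrak{so}(N))$. *)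

(* Defs.v *)
From mathcomp Require Import all_boot all_order all_algebra all_fingroup.
Set Implicit Arguments. Unset Strict Implicit. Unset Printing Implicit Defensive.
Import GRing.Theory.
Local Open Scope ring_scope.

(* Indices 1..N are represented 0-indexed by 'I_N; bar i = N+1-i becomes N-1-i. *)
Definition bar (N : nat) (i : 'I_N) : 'I_N := rev_ord i.

(* Image of F_{ij} = E_{ij} - E_{bar j, bar i} under the standard representation rho. *)
Definition Fmx (N : nat) (i j : 'I_N) : 'M[rat]_N :=
  delta_mx i j - delta_mx (bar j) (bar i).

(* rho(w_{so(N)}(alpha)) = sum over (i_1..i_m) of the ordered product
   F_{i_1 i_alpha(1)} ... F_{i_m i_alpha(m)} (rho is an algebra morphism). *)
Definition rho_w (N m : nat) (alpha : 'S_m) : 'M[rat]_N :=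
  \sum_(f : {ffun 'I_m -> 'I_N})
    foldr (fun k A => Fmx (f k) (f (alpha k)) *m A) 1%:M (enum 'I_m).

Definition wSt (N m : nat) (alpha : 'S_m) : rat :=
  (N%:R)^-1 * \tr (rho_w N alpha).

(* The cycle (1 2 ... m), 0-indexed: k |-> k+1 mod m. *)
Definition cycle_perm (m : nat) : 'S_m := perm (@ordS_inj m).

(* Main.v *)
Require Import Defs.
From mathcomp Require Import all_boot all_order all_algebra all_fingroup.
From mathcomp Require Import ring.
Import Num.Theory.
Import GRing.Theory.
Local Open Scope ring_scope.

Fixpoint isum {T : finType} {V : zmodType} (n : nat) (Phi : seq T -> V) : V :=
  match n with
  | 0 => Phi [::]
  | n'.+1 => \sum_(c : T) isum n' (fun s => Phi (c :: s))
  end.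

Lemma isum_eq {T : finType} {V : zmodType} n (Phi Psi : seq T -> V) :
  (forall s, Phi s = Psi s) -> isum n Phi = isum n Psi.
Proof.
elim: n Phi Psi => [|n IH] Phi Psi H /=; first exact: H.
by apply: eq_bigr => c _; apply: IH => s; apply: H.
Qed.

Lemma ffun_isum {T : finType} {V : zmodType} n (Phi : seq T -> V) :
  \sum_(f : {ffun 'I_n -> T}) Phi (map f (enum 'I_n)) = isum n Phi.
Proof.
elim: n Phi => [|n IH] Phi /=.
  rewrite enum_ord0 /=.
  by rewrite sumr_const card_ffun card_ord expn0.
pose h (p : T * {ffun 'I_n -> T}) : {ffun 'I_n.+1 -> T} :=
  [ffun i => if unlift ord0 i is Some j then p.2 j else p.1].
pose hinv (f : {ffun 'I_n.+1 -> T}) := (f ord0, [ffun j => f (lift ord0 j)]).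
have hK : cancel hinv h.
  move=> f; apply/ffunP => i; rewrite /h /hinv ffunE /=.
  by case: unliftP => [j ->|->]; rewrite ?ffunE.
have Kh : cancel h hinv.
  case=> c g; rewrite /h /hinv /= ffunE unlift_none; congr (_, _).
  by apply/ffunP => j; rewrite !ffunE liftK.
rewrite (reindex h); last by exists hinv => x _.
rewrite -(pair_bigA _ (fun c g => Phi (map (h (c, g)) (enum 'I_n.+1)))) /=.
apply: eq_bigr => c _; rewrite -IH; apply: eq_bigr => g _.
rewrite enum_ordSl /= -map_comp /h ffunE unlift_none; congr (Phi (_ :: _)).
by apply: eq_map => j /=; rewrite ffunE liftK.
Qed.

Fixpoint cp (N : nat) (b : 'I_N) (s : seq 'I_N) : 'M[rat]_N :=
  match s with
  | [::] => 1%:M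
  | x :: s' => Fmx x (head b s') *m cp N b s'
  end.

Lemma foldr_cp (I : eqType) N (g h : I -> I) (f : I -> 'I_N) (k0 : I) k rest :
  (forall x, h x = g x) ->
  fpath g k rest -> g (last k rest) = k0 ->
  foldr (fun k A => Fmx (f k) (f (h k)) *m A) 1%:M (k :: rest)
  = cp N (f k0) (map f (k :: rest)).
Proof.
move=> hg; elim: rest k => [|k' rest IH] k /=; first by move=> _ <-; rewrite hg.
move=> /andP[/eqP gk Hp] Hl.
have := IH k' Hp Hl; rewrite /= => ->; by rewrite hg gk.
Qed.

Lemma val_iter_ordS n i : val (iter i (@ordS n.+1) ord0) = (i %% n.+1)%N.
Proof.
elim: i => [|i IH] /=; first by rewrite mod0n.
rewrite IH -addn1 modnDml addn1 //.
Qed.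

Lemma enum_traject n : enum 'I_n.+1 = traject (@ordS n.+1) ord0 n.+1.
Proof.
apply: (inj_map val_inj); rewrite val_enum_ord.
apply: (@eq_from_nth _ 0%N); first by rewrite size_map size_traject size_iota.
move=> i; rewrite size_iota => Hi.
rewrite nth_iota // (nth_map ord0) ?size_traject // nth_traject //.
by rewrite val_iter_ordS modn_small.
Qed.

Lemma cycle_foldr N n (f : 'I_n.+1 -> 'I_N) :
  foldr (fun k A => Fmx (f k) (f (cycle_perm n.+1 k)) *m A) 1%:M (enum 'I_n.+1)
  = cp N (f ord0) (map f (enum 'I_n.+1)).
Proof.
rewrite enum_traject /=.
apply: (@foldr_cp _ _ (@ordS n.+1)); first by move=> x; rewrite /cycle_perm permE.
  exact: fpath_traject.
rewrite last_traject; apply: val_inj; rewrite /= -/(iter n.+1 _ _).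
by rewrite val_iter_ordS /= (@modn_small n) // modnn.
Qed.

Lemma sum_pick {V : nmodType} N (x : 'I_N) (G : 'I_N -> V) :
  \sum_(c : 'I_N) G c *+ (x == c) = G x.
Proof.
rewrite (bigD1 x) //= eqxx mulr1n big1 ?addr0 // => c.
by rewrite eq_sym => /negbTE ->.
Qed.

Lemma sum_pick' {V : nmodType} N (x : 'I_N) (G : 'I_N -> V) :
  \sum_(c : 'I_N) G c *+ (c == x) = G x.
Proof. by under eq_bigr do rewrite eq_sym; apply: sum_pick. Qed.

Lemma barK N : involutive (@bar N).
Proof. exact: rev_ordK. Qed.

Lemma bar_eq N (a b : 'I_N) : (bar a == bar b) = (a == b).
Proof. exact: (inj_eq (@rev_ord_inj N)). Qed.

Lemma mulmxMnr N (A B : 'M[rat]_N) k : A *m (B *+ k) = (A *m B) *+ k.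
Proof. exact: (raddfMn (mulmx A)). Qed.

Lemma sum_delta_diag N : \sum_(c : 'I_N) (delta_mx c c : 'M[rat]_N) = 1%:M.
Proof.
apply/matrixP => i j; rewrite summxE !mxE.
under eq_bigr do rewrite mxE.
case: (eqVneq i j) => [<-|nij].
  by under eq_bigr do rewrite eq_sym andbb; rewrite (@sum_pick' _ _ i (fun=> 1)).
by rewrite big1 // => c _; case: eqP => // <-; case: eqP => // ej; rewrite ej eqxx in nij.
Qed.

Lemma K1 N (a b : 'I_N) :
  \sum_c Fmx a c *m delta_mx c b = (N%:R - 1) *: delta_mx a b.
Proof.
rewrite /Fmx.
under eq_bigr do rewrite mulmxBl mul_delta_mx mul_delta_mx_cond.
rewrite sumrB sumr_const card_ord sum_pick barK.
by rewrite scalerBl scale1r scaler_nat.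
Qed.

Lemma K2 N (a b : 'I_N) :
  \sum_c Fmx a c *m delta_mx (bar b) (bar c)
  = delta_mx a b - (1%:M *+ (a == b)).
Proof.
rewrite /Fmx.
under eq_bigr do rewrite mulmxBl !mul_delta_mx_cond bar_eq.
rewrite sumrB sum_pick' barK; congr (_ - _).
rewrite sumrMnl; congr (_ *+ _).
rewrite (reindex_inj (@rev_ord_inj N)) /=.
by under eq_bigr do rewrite -/(bar _) barK; rewrite sum_delta_diag.
Qed.

Lemma K3 N (a b : 'I_N) :
  \sum_c Fmx a c *m (1%:M *+ (c == b)) = Fmx a b.
Proof.
under eq_bigr do rewrite mulmxMnr mulmx1.
exact: sum_pick'.
Qed.

Lemma isum_mull N n (A : 'M[rat]_N) (Phi : seq 'I_N -> 'M[rat]_N) :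
  isum n (fun s => A *m Phi s) = A *m isum n Phi.
Proof.
elim: n Phi => [|n IH] Phi //=.
rewrite mulmx_sumr; apply: eq_bigr => c _; exact: IH.
Qed.

Fixpoint W (N n : nat) (a b : 'I_N) : 'M[rat]_N :=
  match n with
  | 0 => Fmx a b
  | n'.+1 => \sum_(c : 'I_N) Fmx a c *m W N n' c b
  end.

Lemma isum_W N n (a b : 'I_N) : isum n (fun s => cp N b (a :: s)) = W N n a b.
Proof.
elim: n a => [|n IH] a /=; first by rewrite mulmx1.
apply: eq_bigr => c _.
rewrite -IH -isum_mull; apply: isum_eq => s //.
Qed.

Lemma rho_W N n : rho_w N (cycle_perm n.+1) = \sum_(a : 'I_N) W N n a a.
Proof.
rewrite /rho_w.
pose Phi (s : seq 'I_N) : 'M[rat]_N := if s is x :: _ then cp N x s else 0.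
transitivity (\sum_(f : {ffun 'I_n.+1 -> 'I_N}) Phi (map f (enum 'I_n.+1))).
  apply: eq_bigr => f _; rewrite cycle_foldr /Phi.
  by rewrite enum_ordSl.
rewrite ffun_isum /=; apply: eq_bigr => a _; exact: isum_W.
Qed.

Definition S N (x y z : rat) (a b : 'I_N) : 'M[rat]_N :=
  x *: delta_mx a b + y *: delta_mx (bar b) (bar a) + z *: (1%:M *+ (a == b)).

Fixpoint st (N n : nat) : rat * rat * rat :=
  match n with
  | 0 => (1, -1, 0)
  | n'.+1 => let: (x, y, z) := st N n' in ((N%:R - 1) * x + y + z, - z, - y)
  end.

Lemma S_step N x y z (a b : 'I_N) :
  \sum_c Fmx a c *m S N x y z c b = S N ((N%:R - 1) * x + y + z) (- z) (- y) a b.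
Proof.
rewrite /S.
under eq_bigr do rewrite !mulmxDr -!scalemxAr.
rewrite !big_split /= -!scaler_sumr K1 K2 K3 /Fmx.
apply/matrixP => i j; rewrite !mxE.
ring.
Qed.

Lemma W_S N n (a b : 'I_N) :
  W N n a b = let: (x, y, z) := st N n in S N x y z a b.
Proof.
elim: n a b => [|n IH] a b /=.
  by rewrite /S /Fmx scale1r scaleN1r scale0r addr0.
under eq_bigr do rewrite IH.
by case: (st N n) => [[x y] z] /=; rewrite S_step.
Qed.

Lemma tr_delta N (i : 'I_N) : \tr (delta_mx i i : 'M[rat]_N) = 1.
Proof.
rewrite /mxtrace; under eq_bigr do rewrite mxE andbb.
by rewrite (@sum_pick' _ _ i (fun=> 1)).
Qed.

Lemma tr_S N x y z (a : 'I_N) : \tr (S N x y z a a) = x + y + z * N%:R.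
Proof.
by rewrite /S !mxtraceD !mxtraceZ !tr_delta eqxx mulr1n mxtrace1 !mulr1.
Qed.

Lemma st_yz N n : ((st N n).1.2 = if odd n then 0 else -1) /\
                  ((st N n).2 = if odd n then 1 else 0).
Proof.
elim: n => [|n IH] //=.
case: (st N n) IH => [[x y] z] /= [-> ->].
by case: (odd n) => /=; rewrite ?oppr0 ?opprK.
Qed.

Lemma st_x N n : N%:R * (st N n).1.1 = (N%:R - 1) ^+ n.+1 + (if odd n then -1 else 1).
Proof.
elim: n => [|n IH] /=; first by rewrite expr1 mulr1 subrK.
have [Hy Hz] := st_yz N n.
case: (st N n) IH Hy Hz => [[x y] z] /= IH -> ->.
rewrite exprS.
case: (odd n) IH => /= IH.
  rewrite -[_ ^+ n.+1](addrK (-1)) -IH; ring.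
rewrite -[_ ^+ n.+1](addrK 1) -IH; ring.
Qed.

Theorem corollary13 (N m : nat) (hN : (1 <= N)%N) (hm : (1 <= m)%N) :
  wSt N (cycle_perm m) =
  (if odd m then (((N%:R - 1) ^+ m + 1 - N%:R) / N%:R : rat)
   else (((N%:R - 1) ^+ m - 1 + N%:R ^+ 2) / N%:R : rat)).
Proof.
case: m hm => [//|n] _.
have HN : (N%:R : rat) != 0 by rewrite pnatr_eq0 -lt0n.
rewrite /wSt rho_W raddf_sum /=.
under eq_bigr do rewrite W_S.
have Hx := st_x N n; have [Hy Hz] := st_yz N n.
case: (st N n) Hx Hy Hz => [[x y] z] /= Hx -> ->.
under eq_bigr do rewrite tr_S.
rewrite sumr_const card_ord.
rewrite -[x](mulKf HN) Hx.
by case: (odd n) => /=; rewrite -mulr_natr; field.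
Qed.
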